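(* Let $(X_n,\eta_n)$ be a time-homogeneous Markov chain on a locally finite set $\Sigma\subseteq\mathbb{R}_+\times S$ ($S$ finite), and suppose that for some $p>2$ there is $C_p<\infty$ with $\mathbb{E}_{x,i}[|X_{n+1}-X_n|^p]\le C_p$ for all $(x,i)\in\Sigma$. Let $b_i\in\mathbb{R}$, $i\in S$, and let $f_r$ be as in the context. Then for any $r\in(2-p,p]$ one can choose $\zeta\in(0,1)$ such that, with $E_n=\{|X_{n+1}-X_n|\le X_n^\zeta\}$, as $x\to\infty$, \[\mathbb{E}_{x,i}\big[|f_r(X_{n+1},\eta_{n+1})-f_r(X_n,\eta_n)|\mathbf 1(E_n^c)\big]=o(x^{r-2}).\]
   Context: $\mathbb{E}_{x,i}[\cdot]=\mathbb{E}[\cdot\mid X_n=x,\eta_n=i]$; $E_n^c$ is the complement of $E_n$. For $r\in\mathbb{R}$, $x_0:=1+\sqrt{|r|\max_i|b_i|}$ and $f_r(x,i)=x^r+\frac r2b_ix^{r-2}$ for $x\ge x_0$, $f_r(x,i)=x_0^r+\frac r2b_ix_0^{r-2}$ for $x<x_0$. *)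

(* Defs.v *)
From HB Require Import structures.
From mathcomp Require Import all_boot all_order all_algebra.
From mathcomp Require Import all_classical all_reals all_analysis.
Set Implicit Arguments. Unset Strict Implicit. Unset Printing Implicit Defensive.
Import Order.TTheory GRing.Theory Num.Theory.
Local Open Scope ring_scope.

Definition xzero (R : realType) (S : finType) (b : S -> R) (r : R) : R :=
  1 + Num.sqrt (`|r| * \big[Num.max/0]_(i : S) `|b i|).

Definition f_r (R : realType) (S : finType) (b : S -> R) (r : R) (z : R * S) : R :=
  let x := if xzero b r <= z.1 then z.1 else xzero b r in
  powR x r + r / 2 * b z.2 * powR x (r - 2).

(* Main.v *)
Require Import Defs.
From HB Require Import structures.
From mathcomp Require Import all_boot all_order all_algebra.
From mathcomp Require Import all_classical all_reals all_analysis.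
Import Order.TTheory GRing.Theory Num.Theory.
Local Open Scope classical_set_scope.
Local Open Scope ring_scope.
From mathcomp Require Import lra ring.
Set Implicit Arguments. Unset Strict Implicit.

Lemma esumZ_le (R : realType) (T : choiceType) (I : set T) (a : T -> \bar R) (c : R) :
  0 <= c -> (forall i, (0 <= a i)%E) ->
  (\esum_(i in I) (c%:E * a i) <= c%:E * \esum_(i in I) a i)%E.
Proof.
move=> c0 a0; apply: ge_ereal_sup => _ [X [finX XI] <-].
rewrite fsbig_finite// -ge0_sume_distrr; last by move=> i _; exact: a0.
apply: lee_wpmul2l; first by rewrite lee_fin.
rewrite -fsbig_finite//; apply: ereal_sup_ubound; exists X => //.
Qed.
Lemma xzero_ge1 (R : realType) (S : finType) (b : S -> R) r : 1 <= xzero b r.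
Proof. by rewrite /xzero lerDl sqrtr_ge0. Qed.

Definition yof (R : realType) (S : finType) (b : S -> R) (r : R) (z : R * S) : R :=
  if xzero b r <= z.1 then z.1 else xzero b r.

Lemma yof_ge1 (R : realType) (S : finType) (b : S -> R) r z : 1 <= yof b r z.
Proof.
rewrite /yof; case: ifP => h; last exact: xzero_ge1.
exact: le_trans (xzero_ge1 b r) h.
Qed.

Lemma f_bound (R : realType) (S : finType) (b : S -> R) (r : R) (z : R * S) :
  `|f_r b r z| <= (1 + `|r / 2| * \big[Num.max/0]_(i : S) `|b i|) *
     powR (yof b r z) (Num.max r 0).
Proof.
have y1 := yof_ge1 b r z.
rewrite /f_r -/(yof b r z).
set y := yof b r z; set s := Num.max r 0; set B := \big[Num.max/0]_(i : S) `|b i|.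
have h1 : powR y r <= powR y s by apply: ler_powR => //; rewrite le_max lexx.
have h2 : powR y (r - 2) <= powR y s.
  by apply: ler_powR => //; rewrite le_max; apply/orP; left; lra.
have hb : `|b z.2| <= B by apply: le_bigmax.
have g0 := powR_ge0 y (r - 2).
have g1 := powR_ge0 y r.
have n0 : 0 <= `|r / 2| by [].
have nb : 0 <= `|b z.2| by [].
apply: (le_trans (ler_normD _ _)).
rewrite (normrM (r / 2 * b z.2)) (normrM (r / 2)) (ger0_norm g1) (ger0_norm g0).
have : `|r / 2| * `|b z.2| * powR y (r - 2) <= `|r / 2| * B * powR y s.
  exact: (ler_pM (mulr_ge0 n0 nb) g0 (ler_pM n0 nb (lexx _) hb) h2).
nra.
Qed.

Lemma mbound (R : realType) (x D zeta s p : R) :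
  1 <= x -> 0 < zeta <= 1 -> 0 <= s <= p -> powR x zeta < D ->
  powR (if x <= D then D else x) s <= powR D p * powR x (s - zeta * p).
Proof.
move=> x1 /andP[z0 z1] /andP[s0 sp] hD.
have x0 : 0 < x by lra.
have xz0 : 0 < powR x zeta by exact: powR_gt0.
have D0 : 0 < D by lra.
have [h|h] := boolP (x <= D).
- rewrite /=.
  have e : s = p + (s - p) by ring.
  rewrite [in X in powR D X <= _]e powRD; last by apply/implyP => _; rewrite gt_eqF.
  rewrite ler_pM2l; last by apply: powR_gt0.
  have e2 : s - p = - (p - s) by ring.
  rewrite e2 powRN.
  have hle : powR (powR x zeta) (p - s) <= powR D (p - s).
    apply: ge0_ler_powR; [lra | by rewrite nnegrE ltW | by rewrite nnegrE ltW | exact: ltW].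
  have hpos : 0 < powR (powR x zeta) (p - s) by apply: powR_gt0.
  apply: (le_trans (y := (powR (powR x zeta) (p - s))^-1)).
    by rewrite lef_pV2 // ?posrE //; apply: lt_le_trans hle.
  rewrite -powRrM -powRN.
  apply: ler_powR => //; nra.
- rewrite /=; move: h; rewrite -ltNge => h.
  have e : s = (s - zeta * p) + zeta * p by ring.
  rewrite [in X in powR x X <= _]e powRD; last by apply/implyP => _; rewrite gt_eqF.
  rewrite mulrC ler_pM2r; last by apply: powR_gt0.
  rewrite powRrM; apply: ge0_ler_powR; [lra | by rewrite nnegrE ltW | by rewrite nnegrE ltW | exact: ltW].
Qed.

Lemma pw (R : realType) (S : finType) (b : S -> R) (r zeta p : R) (z w : R * S) :
  xzero b r <= z.1 -> 0 < zeta <= 1 -> Num.max r 0 <= p ->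
  powR z.1 zeta < `|w.1 - z.1| ->
  `|f_r b r w - f_r b r z| <=
    (1 + `|r / 2| * \big[Num.max/0]_(i : S) `|b i|) * (powR 2 (Num.max r 0) + 1) *
    (powR `|w.1 - z.1| p * powR z.1 (Num.max r 0 - zeta * p)).
Proof.
set s := Num.max r 0; set x := z.1; set D : R := `|w.1 - z.1|.
move=> hx hz hsp hD.
set Kf := 1 + `|r / 2| * \big[Num.max/0]_(i : S) `|b i|.
have s0 : 0 <= s by rewrite le_max lexx orbT.
have x1 : 1 <= x := le_trans (xzero_ge1 b r) hx.
have Kf0 : 0 <= Kf.
  rewrite /Kf; apply: addr_ge0 => //; apply: mulr_ge0 => //.
  exact: le_trans (normr_ge0 (b z.2)) (le_bigmax _ _ z.2).
have yz : yof b r z = x by rewrite /yof -/x hx.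
have D0 : 0 <= D by exact: normr_ge0.
have hwD : w.1 <= x + D.
  have := ler_norm (w.1 - z.1); rewrite -/D -/x; lra.
have yw : yof b r w <= x + D.
  rewrite /yof; case: ifP => _; lra.
have yw0 : 0 <= yof b r w by have := yof_ge1 b r w; lra.
set m := if x <= D then D else x.
have hm1 : x + D <= 2 * m by rewrite /m; case: ifP => h; [lra | move/negbT: h; rewrite -ltNge => h; lra].
have hm2 : x <= m by rewrite /m; case: ifP => h; [lra | lra].
have m0 : 0 <= m by lra.
have hA : powR (yof b r w) s <= powR 2 s * powR m s.
  rewrite -powRM //; apply: ge0_ler_powR => //; rewrite ?nnegrE //; [lra | lra].
have hB : powR x s <= powR m s.
  by apply: ge0_ler_powR => //; rewrite ?nnegrE //; lra.
have hM : powR m s <= powR D p * powR x (s - zeta * p).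
  apply: mbound => //; apply/andP; split => //.
have fw := f_bound b r w; have fz := f_bound b r z; rewrite yz -/Kf -/s in fz.
rewrite -/Kf -/s in fw.
apply: (le_trans (ler_normB _ _)).
have g1 := powR_ge0 2 s; have g2 := powR_ge0 m s.
have : Kf * powR (yof b r w) s + Kf * powR x s <= Kf * (powR 2 s + 1) * powR m s.
  have := ler_pM Kf0 (powR_ge0 _ _) (lexx Kf) hA.
  have := ler_pM Kf0 (powR_ge0 _ _) (lexx Kf) hB.
  nra.
have := ler_pM (mulr_ge0 Kf0 (addr_ge0 g1 ler01)) g2 (lexx (Kf * (powR 2 s + 1))) hM.
lra.
Qed.

Lemma tail_bound (R : realType) (x d q : R) :
  0 < d -> 0 < q -> powR (q^-1) (2 / d) <= x -> powR x (- (d / 2)) <= q.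
Proof.
move=> d0 q0 hx.
have qi0 : 0 < q^-1 by rewrite invr_gt0.
have M0 : 0 < powR (q^-1) (2 / d) by exact: powR_gt0.
have x0 : 0 < x by exact: lt_le_trans hx.
have h : q^-1 <= powR x (d / 2).
  have -> : q^-1 = powR (powR (q^-1) (2 / d)) (d / 2).
    rewrite -powRrM.
    have -> : 2 / d * (d / 2) = 1 by field; rewrite gt_eqF.
    by rewrite powRr1 // ltW.
  apply: ge0_ler_powR => //; rewrite ?nnegrE; [|exact: ltW|exact: ltW].
  apply: divr_ge0; lra.
rewrite powRN -[q]invrK lef_pV2 ?posrE //.
by apply: powR_gt0.
Qed.

Theorem lemma3p7 (R : realType) (S : finType) (Sigma : set (R * S))
  (P : R * S -> R * S -> R) (p Cp : R) (b : S -> R)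
  (hSig_pos : forall z, Sigma z -> 0 <= z.1)
  (hSig_lf : forall M : R, finite_set [set z | Sigma z /\ z.1 <= M])
  (hP0 : forall z w, 0 <= P z w)
  (hP1 : forall z, Sigma z -> (\esum_(w in Sigma) (P z w)%:E = 1)%E)
  (hp : 2 < p)
  (hmom : forall z, Sigma z ->
     (\esum_(w in Sigma) (P z w * powR `|w.1 - z.1| p)%:E <= Cp%:E)%E) :
  forall r : R, 2 - p < r <= p ->
  exists zeta : R, 0 < zeta < 1 /\
    forall eps : R, 0 < eps -> exists M : R, forall z, Sigma z -> M <= z.1 ->
      (\esum_(w in Sigma)
         (P z w * `|f_r b r w - f_r b r z|
            * (if powR z.1 zeta < `|w.1 - z.1| then 1 else 0))%:E
       <= (eps * powR z.1 (r - 2))%:E)%E.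
Proof.
move=> r /andP[hr1 hr2].
set s := Num.max r 0.
have hs : (s = r /\ 0 <= r) \/ (s = 0 /\ r < 0).
  rewrite /s; case: (lerP 0 r) => h; [left; split => //; exact: max_l | right; split => //; apply: max_r; exact: ltW].
have s0 : 0 <= s by rewrite le_max lexx orbT.
have sp : s <= p by case: hs => -[-> ?]; lra.
set d := (r - 2) - (s - p).
have d0 : 0 < d by rewrite /d; case: hs => -[-> ?]; lra.
have dp : d <= p - 2 by rewrite /d; case: hs => -[-> ?]; lra.
have p0 : 0 < p by lra.
set zeta := 1 - d / (2 * p).
have hdp : 0 < d / (2 * p) < 1 / 2.
  apply/andP; split; first by apply: divr_gt0; lra.
  rewrite ltr_pdivrMr; last lra.
  lra.
have z0 : 0 < zeta by rewrite /zeta; lra.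
have z1 : zeta < 1 by rewrite /zeta; lra.
have he1 : s - zeta * p = (r - 2) + - (d / 2).
  rewrite /zeta /d; field; lra.
exists zeta; split; first by rewrite z0 z1.
move=> eps eps0.
set Kf := 1 + `|r / 2| * \big[Num.max/0]_(i : S) `|b i|.
set K := Kf * (powR 2 s + 1).
have Kf0 : 0 <= Kf.
  rewrite /Kf; apply: addr_ge0 => //; apply: mulr_ge0 => //.
  exact: bigmax_ge_id.
have K0 : 0 <= K by apply: mulr_ge0 => //; apply: addr_ge0 => //; exact: powR_ge0.
set Cq := Num.max Cp 0.
have Cq0 : 0 <= Cq by rewrite le_max lexx orbT.
have CpCq : Cp <= Cq by rewrite le_max lexx.
set q := eps / (K * Cq + 1).
have KC0 : 0 <= K * Cq by exact: mulr_ge0.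
have q0 : 0 < q by apply: divr_gt0 => //; lra.
have hq : K * Cq * q <= eps.
  rewrite /q mulrA ler_pdivrMr; last lra.
  nra.
exists (xzero b r + powR (q^-1) (2 / d)).
move=> z Sz hM.
have g1 := powR_ge0 (q^-1) (2 / d).
have g2 := xzero_ge1 b r.
have hx0 : xzero b r <= z.1 by lra.
have hx1 : powR (q^-1) (2 / d) <= z.1 by lra.
have xpos : 0 < z.1 by lra.
apply: (le_trans (y := ((K * powR z.1 (s - zeta * p))%:E *
   \esum_(w in Sigma) (P z w * powR `|w.1 - z.1| p)%:E)%E)).
  have c0 : 0 <= K * powR z.1 (s - zeta * p) by apply: mulr_ge0 => //; exact: powR_ge0.
  have a0 : forall i, (0 <= (fun w => (P z w * powR `|w.1 - z.1| p)%:E) i)%E.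
    by move=> i; rewrite lee_fin; apply: mulr_ge0 => //; exact: powR_ge0.
  apply: (le_trans _ (esumZ_le Sigma c0 a0)).
  apply: le_esum => w Sw; rewrite -EFinM lee_fin.
  case: ifP => h.
  - rewrite mulr1.
    have hz : 0 < zeta <= 1 by rewrite z0 ltW.
    have H := pw hx0 hz sp h.
    have H2 := ler_wpM2l (hP0 z w) H.
    apply: (le_trans H2); rewrite -/s -/Kf -/K.
    have E : forall a b' c e : R, a * (b' * (c * e)) = b' * e * (a * c).
      by move=> a b' c e; ring.
    by rewrite E.
  - rewrite mulr0; apply: mulr_ge0; first by apply: mulr_ge0 => //; exact: powR_ge0.
    by apply: mulr_ge0 => //; exact: powR_ge0.
have hc0 : (0 <= (K * powR z.1 (s - zeta * p))%:E)%E.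
  by rewrite lee_fin; apply: mulr_ge0 => //; exact: powR_ge0.
have hmq : (\esum_(w in Sigma) (P z w * powR `|w.1 - z.1| p)%:E <= Cq%:E)%E.
  by apply: (le_trans (hmom z Sz)); rewrite lee_fin.
apply: (le_trans (lee_wpmul2l hc0 hmq)).
rewrite -EFinM lee_fin he1 powRD; last by apply/implyP => _; rewrite gt_eqF.
have T := tail_bound d0 q0 hx1.
have T0 := powR_ge0 z.1 (- (d / 2)).
have X0 := powR_ge0 z.1 (r - 2).
have : K * Cq * powR z.1 (- (d / 2)) <= eps.
  apply: le_trans hq; exact: ler_wpM2l.
nra.
Qed.
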